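(* Let $\beta>2\alpha>0$, let $\lambda_{\min},\lambda_{\max}>0$ be the smallest and largest eigenvalues of $A$, and let $R>2\lambda_{\max}/\lambda_{\min}$, so that $c_{11}:=\frac{\lambda_{\min}}{2}-\frac{\lambda_{\max}}{R}>0$. Then for every $x\in\mathbb{R}^{s_N}$ with $\|x\|>R\sqrt N$, $$\frac{N}{s_N}\varphi_N\Big(\sqrt{\tfrac{s_N}{N}}x\Big)\ge c_{11}\|x\|_2^2.$$
   Context: $A=\beta I+\alpha(P+P^T)$ is the $s_N\times s_N$ symmetric circulant matrix ($P$ the cyclic shift), with $s_N\le N$ a positive integer; $e_k$ the standard basis of $\mathbb{R}^{s_N}$; $\varphi_N(x)=\frac12x^TAx-\sum_{k=1}^{s_N}\log\cosh(x^TAe_k)$; $\|\cdot\|=\|\cdot\|_2$ is the Euclidean norm. *)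

(* Defs.v *)
From HB Require Import structures.
From mathcomp Require Import all_boot all_order all_algebra.
From mathcomp Require Import all_classical all_reals all_analysis.
Set Implicit Arguments. Unset Strict Implicit. Unset Printing Implicit Defensive.
Import Order.TTheory GRing.Theory Num.Theory.
Local Open Scope ring_scope.

Definition cycshift (R : realType) (s : nat) : 'M[R]_s :=
  \matrix_(i < s, j < s) ((nat_of_ord j == (i.+1 %% s)%N)%:R).

Definition circA (R : realType) (s : nat) (alpha beta : R) : 'M[R]_s :=
  beta%:M + alpha *: (cycshift R s + (cycshift R s)^T).

Definition coshR (R : realType) (t : R) : R := (expR t + expR (- t)) / 2.

Definition norm2 (R : realType) (s : nat) (x : 'cV[R]_s) : R :=
  Num.sqrt (\sum_(i < s) x i 0 ^+ 2).

Definition phiN (R : realType) (s : nat) (alpha beta : R) (x : 'cV[R]_s) : R :=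
  2^-1 * (x^T *m circA s alpha beta *m x) 0 0
  - \sum_(k < s) ln (coshR ((x^T *m circA s alpha beta *m delta_mx k (0 : 'I_1)) 0 0)).

(* Main.v *)
Require Import Defs.
From HB Require Import structures.
From mathcomp Require Import all_boot all_order all_algebra.
From mathcomp Require Import all_classical all_reals all_analysis.
From mathcomp Require Import ring lra.
Import Order.TTheory GRing.Theory Num.Theory.
Import numFieldNormedType.Exports.
Local Open Scope ring_scope.
Set Implicit Arguments. Unset Strict Implicit.

Definition bf (R : realType) n (B : 'M[R]_n) (u w : 'rV[R]_n) : R :=
  \sum_i \sum_j u 0 i * B i j * w 0 j.

Lemma bf_mx (R : realType) n (B : 'M[R]_n) (v : 'rV[R]_n) :
  (v *m B *m v^T) 0 0 = bf B v v.
Proof.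
rewrite /bf mxE; rewrite exchange_big /=; apply: eq_bigr => j _.
rewrite !mxE mulr_suml; apply: eq_bigr => i _; by [].
Qed.

Lemma bf_sym (R : realType) n (B : 'M[R]_n) u w : B^T = B -> bf B w u = bf B u w.
Proof.
move=> sB; rewrite /bf exchange_big /=; apply: eq_bigr => i _; apply: eq_bigr => j _.
by rewrite -[in RHS]sB mxE; ring.
Qed.

Lemma bf_expand (R : realType) n (B : 'M[R]_n) u w (t : R) : B^T = B ->
  bf B (u + t *: w) (u + t *: w) = bf B u u + 2 * t * bf B u w + t ^+ 2 * bf B w w.
Proof.
move=> sB.
have -> : bf B (u + t *: w) (u + t *: w) =
   bf B u u + t * bf B u w + t * bf B w u + t ^+ 2 * bf B w w.
  rewrite /bf !mulr_sumr -!big_split /=; apply: eq_bigr => i _.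
  rewrite !mulr_sumr -!big_split /=; apply: eq_bigr => j _.
  rewrite !mxE; ring.
rewrite (bf_sym _ _ sB); ring.
Qed.

Lemma bfZ (R : realType) n (B : 'M[R]_n) v (k : R) :
  bf B (k *: v) (k *: v) = k ^+ 2 * bf B v v.
Proof.
rewrite /bf mulr_sumr; apply: eq_bigr => i _; rewrite mulr_sumr.
apply: eq_bigr => j _; rewrite !mxE; ring.
Qed.

Lemma bf1 (R : realType) n (v : 'rV[R]_n) : bf 1%:M v v = \sum_i v 0 i ^+ 2.
Proof.
rewrite /bf; apply: eq_bigr => i _.
rewrite (bigD1 i) //= big1 => [|j /negPf ji]; last by rewrite !mxE eq_sym ji mulr0 mul0r.
by rewrite !mxE eqxx addr0 mulr1 expr2.
Qed.

Lemma bfB (R : realType) n (A : 'M[R]_n) (m : R) v :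
  bf (A - m%:M) v v = bf A v v - m * \sum_i v 0 i ^+ 2.
Proof.
rewrite -bf1 /bf mulr_sumr -sumrB; apply: eq_bigr => i _.
rewrite mulr_sumr -sumrB; apply: eq_bigr => j _.
rewrite !mxE; ring.
Qed.

Lemma cont_sum (R : realType) (T : topologicalType) (I : Type) (r : seq I)
   (F : I -> T -> R) : (forall i, continuous (F i)) ->
   continuous (fun x => \sum_(i <- r) F i x).
Proof.
move=> Fc; elim: r => [|a r IH].
  under eq_fun do rewrite big_nil. exact: cst_continuous.
under eq_fun do rewrite big_cons.
by move=> x; apply: continuousD; [exact: Fc | exact: IH].
Qed.

Lemma bf_cont (R : realType) n (B : 'M[R]_n) :
  continuous (fun v : 'rV[R]_n => bf B v v).
Proof.
rewrite /bf; apply: cont_sum => i; apply: cont_sum => j.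
move=> x.
have hi : continuous (fun v : 'rV[R]_n => v 0 i) := @coord_continuous R 1 n 0 i.
have hj : continuous (fun v : 'rV[R]_n => v 0 j) := @coord_continuous R 1 n 0 j.
have hc : continuous (fun v : 'rV[R]_n => B i j) := @cst_continuous _ _ (B i j).
exact: (continuousM (continuousM (hi x) (hc x)) (hj x)).
Qed.

Lemma sum_sq_eq0 (R : realType) n (v : 'rV[R]_n) :
  \sum_i v 0 i ^+ 2 = 0 -> v = 0.
Proof.
move=> /eqP; rewrite psumr_eq0 => [/allP H|i _]; last exact: sqr_ge0.
apply/rowP => i; rewrite mxE.
by have /(_ (mem_index_enum i)) := H i; rewrite implyTb sqrf_eq0 => /eqP.
Qed.

Lemma quad_nonneg (R : realType) (a b : R) :
  (forall t, 0 <= 2 * t * b + t ^+ 2 * a) -> b = 0.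
Proof.
move=> H; set d := `|a| + 1.
have d0 : 0 < d by rewrite /d ltr_wpDl.
have ha : a <= d by rewrite /d; apply: le_trans (ler_norm a) _; rewrite lerDl.
have := H (- b / d).
have -> : 2 * (- b / d) * b + (- b / d) ^+ 2 * a = b ^+ 2 / d * (a / d - 2).
  by field; rewrite gt_eqF.
move=> h; apply/eqP; apply/negPn/negP => bn0.
have p : 0 < b ^+ 2 / d by rewrite divr_gt0 // exprn_even_gt0 //=.
have q : a / d - 2 < 0.
  rewrite subr_lt0; apply: (le_lt_trans (y := 1)); last by rewrite ltr1n.
  by rewrite ler_pdivrMr // mul1r.
have : b ^+ 2 / d * (a / d - 2) < 0 by rewrite pmulr_rlt0.
by rewrite ltNge h.
Qed.

Section Ray.
Local Open Scope classical_set_scope.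

Lemma rayleigh (R : realType) n (A : 'M[R]_n) : (0 < n)%N -> A^T = A ->
  exists2 m, eigenvalue A m &
    forall v : 'rV[R]_n, m * \sum_i v 0 i ^+ 2 <= bf A v v.
Proof.
move=> n0 sA.
pose nr := fun v : 'rV[R]_n => \sum_i v 0 i ^+ 2.
have nrc : continuous nr.
  have -> : nr = (fun v => bf 1%:M v v) by apply: funext => v; rewrite bf1.
  exact: bf_cont.
pose S := [set v : 'rV[R]_n | nr v = 1].
have S0 : S !=set0.
  exists (delta_mx 0 (Ordinal n0)); rewrite /S /nr /=.
  rewrite (bigD1 (Ordinal n0)) //= big1 => [|j /negPf ji]; last by rewrite !mxE ji /= expr0n.
  by rewrite !mxE !eqxx /= expr1n addr0.
have Scomp : compact S.
  apply: (@subclosed_compact _ S [set v : 'rV[R]_n | forall i, `[-1, 1]%classic (v ord0 i)]).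
  - apply: (@preimage_closed _ _ nr [set x | x = 1]); last exact: closed_eq.
    by move=> v _; exact: nrc.
  - have := (@rV_compact R n (fun _ => `[-1, 1]%classic) (fun _ => @segment_compact R _ _)).
    move=> H.
    exact H.
  move=> v; rewrite /S /= => Sv i.
  have h : v ord0 i ^+ 2 <= 1.
    rewrite -Sv /nr (bigD1 i) //= lerDl; apply: sumr_ge0 => j _; exact: sqr_ge0.
  rewrite /= in_itv /=; apply/andP; split; nra.
have [c cS cmin] := EVT_min_rV S0 Scomp (continuous_subspaceT (@bf_cont R n A)).
move/set_mem: cS; rewrite /S /= => nrc1.
set m := bf A c c.
have sB : (A - m%:M)^T = A - m%:M.
  apply/matrixP => i j; rewrite !mxE -[in RHS]sA !mxE eq_sym //.
have nonneg : forall v, 0 <= bf (A - m%:M) v v.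
  move=> v; rewrite bfB; case: (eqVneq (nr v) 0) => [/sum_sq_eq0 -> | nz].
    rewrite [bf A 0 0]/bf big1 => [|i _]; last by rewrite big1 // => j _; rewrite mxE !mul0r.
    by rewrite big1 ?mulr0 ?subr0 // => i _; rewrite mxE expr0n.
  have np : 0 < nr v by rewrite lt_def nz /=; apply: sumr_ge0 => i _; exact: sqr_ge0.
  set k := (Num.sqrt (nr v))^-1.
  have k2 : k ^+ 2 * nr v = 1.
    by rewrite /k exprVn sqr_sqrtr ?mulVf // ltW.
  have uS : (k *: v) \in S.
    apply: mem_set; rewrite /S /nr /=.
    rewrite -k2 /nr mulr_sumr; apply: eq_bigr => i _; rewrite mxE; ring.
  have := cmin _ uS; rewrite bfZ -/m => h.
  rewrite subr_ge0 -[bf A v v]mul1r -k2 (mulrC (k ^+ 2)) -mulrA mulrC.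
  by change (nr v * m <= nr v * (k ^+ 2 * bf A v v)); rewrite ler_pM2l.
have bz : forall w, bf (A - m%:M) c w = 0.
  move=> w; apply: (@quad_nonneg _ (bf (A - m%:M) w w)) => t.
  have := nonneg (c + t *: w); rewrite bf_expand // bfB -/(nr c) nrc1 mulr1 subrr add0r.
  done.
set w := c *m (A - m%:M).
have w0 : w = 0.
  apply: sum_sq_eq0; rewrite -[RHS](bz w) /bf exchange_big /=; apply: eq_bigr => j _.
  rewrite expr2 {1}/w mxE mulr_suml; apply: eq_bigr => i _; done.
exists m.
  apply/eigenvalueP; exists c.
    by apply/eqP; rewrite -subr_eq0 -mul_mx_scalar -mulmxBr -/w w0.
  apply/negP => /eqP c0; move: nrc1; rewrite /nr c0.
  rewrite big1 => [/eqP|i _]; last by rewrite mxE expr0n.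
  by rewrite eq_sym oner_eq0.
move=> v; have := nonneg v; rewrite bfB subr_ge0 //.
Qed.

End Ray.

Lemma lncosh_le (R : realType) (t : R) : ln (coshR t) <= `|t|.
Proof.
have e1 : expR t <= expR `|t| by rewrite ler_expR ler_norm.
have e2 : expR (- t) <= expR `|t| by rewrite ler_expR -normrN ler_norm.
have cp : 0 < coshR t by rewrite /coshR divr_gt0 // addr_gt0 // expR_gt0.
have ch : coshR t <= expR `|t| by rewrite /coshR ler_pdivrMr //; lra.
by rewrite -[X in _ <= X]expRK ler_ln ?posrE ?expR_gt0.
Qed.

Lemma cs_ineq (R : realType) n (u : 'I_n -> R) :
  (\sum_i u i) ^+ 2 <= n%:R * \sum_i u i ^+ 2.
Proof.
have h : 0 <= \sum_i \sum_j (u i - u j) ^+ 2.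
  by apply: sumr_ge0 => i _; apply: sumr_ge0 => j _; exact: sqr_ge0.
have e : \sum_i \sum_j (u i - u j) ^+ 2 =
   2 * (n%:R * \sum_i u i ^+ 2) - 2 * (\sum_i u i) ^+ 2.
  have e1 : \sum_i \sum_j (u i - u j) ^+ 2 =
     \sum_(i < n) \sum_(j < n) u i ^+ 2 + \sum_(i < n) \sum_(j < n) u j ^+ 2 - 2 * \sum_i \sum_j (u i * u j).
    rewrite mulr_sumr -big_split -sumrB /=; apply: eq_bigr => i _.
    rewrite mulr_sumr -big_split -sumrB /=; apply: eq_bigr => j _; ring.
  rewrite e1 expr2 mulr_suml.
  have -> : \sum_i \sum_j u i * u j = \sum_i (u i * \sum_j u j).
    by apply: eq_bigr => i _; rewrite mulr_sumr.
  have -> : \sum_(i < n) \sum_(j < n) u i ^+ 2 = n%:R * \sum_i u i ^+ 2.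
    rewrite mulr_sumr; apply: eq_bigr => i _; rewrite sumr_const card_ord; ring.
  rewrite exchange_big /=.
  have -> : \sum_(j < n) \sum_(i < n) u j ^+ 2 = n%:R * \sum_i u i ^+ 2.
    rewrite mulr_sumr; apply: eq_bigr => i _; rewrite sumr_const card_ord; ring.
  ring.
rewrite e in h; lra.
Qed.

Section Circ.
Variables (R : realType) (s : nat) (alpha beta : R).
Hypothesis s0 : (0 < s)%N.

Definition Pm (i j : 'I_s) : R := ((j : nat) == (i.+1 %% s)%N)%:R.

Lemma circAE i j : circA s alpha beta i j = beta * (i == j)%:R + alpha * (Pm i j + Pm j i).
Proof. by rewrite /circA !mxE mulr_natr. Qed.

Lemma ordS_val (i : 'I_s) : (ordS i : nat) = (i.+1 %% s)%N.
Proof. by []. Qed.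

Lemma Pm_row i : \sum_j Pm i j = 1.
Proof.
rewrite (bigD1 (ordS i)) //= big1 => [|j ji]; first by rewrite /Pm -ordS_val eqxx addr0.
by rewrite /Pm -ordS_val; have /negPf -> : (j : nat) != ordS i.
Qed.

Lemma Pm_col j : \sum_i Pm i j = 1.
Proof.
rewrite (bigD1 (ord_pred j)) //= big1 => [|i ij]; first by rewrite /Pm -ordS_val ord_predK eqxx addr0.
rewrite /Pm -ordS_val; case: eqP => // /val_inj e.
by move: ij; rewrite e ordSK eqxx.
Qed.

Lemma delta_sum (j : 'I_s) (b : R) : \sum_i b * (i == j)%:R = b.
Proof.
rewrite (bigD1 j) //= big1 => [|i /negPf ->]; first by rewrite eqxx mulr1 addr0.
by rewrite mulr0.
Qed.

Lemma circA_col j : \sum_i circA s alpha beta i j = beta + 2 * alpha.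
Proof.
under eq_bigr do rewrite circAE.
rewrite big_split /= delta_sum -mulr_sumr big_split /= Pm_col Pm_row; ring.
Qed.

Lemma circA_row i : \sum_j circA s alpha beta i j = beta + 2 * alpha.
Proof.
under eq_bigr do rewrite circAE.
rewrite big_split /=.
under eq_bigr do rewrite eq_sym.
rewrite delta_sum -mulr_sumr big_split /= Pm_col Pm_row; ring.
Qed.

Lemma circA_sym : (circA s alpha beta)^T = circA s alpha beta.
Proof. by apply/matrixP => i j; rewrite mxE !circAE eq_sym [Pm j i + _]addrC. Qed.

Lemma circA_ge0 i j : 0 < alpha -> 2 * alpha < beta -> 0 <= circA s alpha beta i j.
Proof.
move=> a0 ab; rewrite circAE; apply: addr_ge0; apply: mulr_ge0.
- lra.
- by rewrite ler0n.
- lra.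
- by apply: addr_ge0; rewrite ler0n.
Qed.

Lemma circA_eig : eigenvalue (circA s alpha beta) (beta + 2 * alpha).
Proof.
apply/eigenvalueP; exists (const_mx 1).
  apply/matrixP => i j; rewrite !mxE.
  under eq_bigr do rewrite mxE mul1r.
  by rewrite circA_col mulr1.
apply/negP => /eqP /matrixP /(_ 0 (Ordinal s0)); rewrite !mxE => /eqP.
by rewrite oner_eq0.
Qed.

End Circ.

Unset Implicit Arguments. Set Strict Implicit.

Theorem lemma7p8 (R : realType) (N s : nat) (alpha beta lmin lmax Rad : R) :
  (0 < s)%N -> (s <= N)%N ->
  0 < alpha -> 2 * alpha < beta ->
  eigenvalue (circA s alpha beta) lmin ->
  eigenvalue (circA s alpha beta) lmax ->
  (forall a : R, eigenvalue (circA s alpha beta) a -> lmin <= a <= lmax) ->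
  0 < lmin -> 0 < lmax ->
  2 * lmax / lmin < Rad ->
  forall x : 'cV[R]_s,
    Rad * Num.sqrt (N%:R) < norm2 x ->
    (N%:R / s%:R) * phiN alpha beta (Num.sqrt (s%:R / N%:R) *: x)
      >= (lmin / 2 - lmax / Rad) * norm2 x ^+ 2.
Proof.
move=> s0 sN a0 ab _ _ hall lmin0 lmax0 hR x hx.
set A := circA s alpha beta.
have N0 : (0 < N)%N by apply: leq_trans sN.
have sp : 0 < s%:R :> R by rewrite ltr0n.
have Np : 0 < N%:R :> R by rewrite ltr0n.
have Radp : 0 < Rad by apply: lt_trans hR; rewrite divr_gt0 // mulr_gt0.
have lmaxge : beta + 2 * alpha <= lmax.
  by have /andP[] := hall _ (circA_eig alpha beta s0).
have [m em hm] := rayleigh s0 (circA_sym s alpha beta).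
have lm : lmin <= m by have /andP[] := hall _ em.
set S2 := \sum_i x i 0 ^+ 2.
have S2ge0 : 0 <= S2 by apply: sumr_ge0 => i _; exact: sqr_ge0.
set n2 := norm2 x.
have n2sq : n2 ^+ 2 = S2 by rewrite /n2 /norm2 sqr_sqrtr.
have n2ge0 : 0 <= n2 by rewrite /n2 /norm2 sqrtr_ge0.
set a := Num.sqrt (s%:R : R).
set b := Num.sqrt (N%:R : R).
have ap : 0 < a by rewrite /a sqrtr_gt0.
have bp : 0 < b by rewrite /b sqrtr_gt0.
have a2 : a ^+ 2 = s%:R by rewrite /a sqr_sqrtr // ltW.
have b2 : b ^+ 2 = N%:R by rewrite /b sqr_sqrtr // ltW.
have ce : Num.sqrt (s%:R / N%:R) = a / b by rewrite sqrtrM ?sqrtrV // ltW.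
rewrite ce.
set c := a / b.
set y := c *: x.
have Qx : lmin * S2 <= (x^T *m A *m x) 0 0.
  rewrite -{2}(trmxK x) bf_mx; apply: le_trans (hm _).
  have -> : \sum_i x^T 0 i ^+ 2 = S2 by apply: eq_bigr => i _; rewrite mxE.
  by rewrite ler_wpM2r.
have Qy : (y^T *m A *m y) 0 0 = c ^+ 2 * (x^T *m A *m x) 0 0.
  rewrite -{2}(trmxK y) -{2}(trmxK x) !bf_mx.
  have -> : y^T = c *: x^T by apply/matrixP => i j; rewrite !mxE.
  by rewrite bfZ.
have tk : forall k : 'I_s, (y^T *m A *m delta_mx k (0 : 'I_1)) 0 0
     = \sum_i y i 0 * A i k.
  move=> k; rewrite -colE !mxE; apply: eq_bigr => i _; by rewrite !mxE.
have Lb : \sum_(k < s) ln (coshR ((y^T *m A *m delta_mx k (0 : 'I_1)) 0 0))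
     <= lmax * (c * (a * n2)).
  apply: (le_trans (y := \sum_(k < s) \sum_i `|y i 0| * A i k)).
    apply: ler_sum => k _; rewrite tk; apply: le_trans (lncosh_le _) _.
    apply: le_trans (ler_norm_sum _ _ _) _; apply: ler_sum => i _.
    by rewrite normrM [`|A i k|]ger0_norm //; exact: circA_ge0.
  rewrite exchange_big /=.
  have -> : \sum_i \sum_(k < s) `|y i 0| * A i k = (beta + 2 * alpha) * \sum_i `|y i 0|.
    rewrite mulr_sumr; apply: eq_bigr => i _; rewrite -mulr_sumr circA_row mulrC //.
  have cs : \sum_i `|x i 0| <= a * n2.
    have e2 : \sum_i `|x i 0| ^+ 2 = S2 by apply: eq_bigr => i _; rewrite real_normK // num_real.
    have h : (\sum_i `|x i 0|) ^+ 2 <= (a * n2) ^+ 2.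
      rewrite exprMn a2 n2sq -e2; exact: (cs_ineq (fun i => `|x i 0|)).
    have h0 : 0 <= \sum_i `|x i 0| by apply: sumr_ge0 => i _.
    have h1 : 0 <= a * n2 by rewrite mulr_ge0 // ltW.
    nra.
  have -> : \sum_i `|y i 0| = c * \sum_i `|x i 0|.
    rewrite mulr_sumr; apply: eq_bigr => i _; rewrite mxE normrM ger0_norm //.
    by rewrite /c divr_ge0 // ltW.
  have cp : 0 < c by rewrite /c divr_gt0.
  apply: ler_pM; [lra | by rewrite mulr_ge0 ?sumr_ge0 // ltW | done |].
  by rewrite ler_pM2l.
rewrite /phiN -/A Qy.
set Q := (x^T *m A *m x) 0 0.
set L := \sum_(k < s) _.
have e : N%:R / s%:R * (2^-1 * (c ^+ 2 * Q) - L) = Q / 2 - b ^+ 2 / a ^+ 2 * L.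
  rewrite -a2 -b2 /c; field.
  by apply/andP; split; rewrite gt_eqF // ?exprn_gt0.
rewrite e.
have Lb' : b ^+ 2 / a ^+ 2 * L <= lmax * b * n2.
  have h : b ^+ 2 / a ^+ 2 * (lmax * (c * (a * n2))) = lmax * b * n2.
    by rewrite /c; field; rewrite !gt_eqF.
  rewrite -h ler_wpM2l // divr_ge0 // exprn_ge0 // ltW //.
have hb : b * Rad < n2 by rewrite mulrC.
have : lmax * b * n2 <= lmax / Rad * n2 ^+ 2.
  have h1 : 0 <= lmax / Rad * n2 * (n2 - b * Rad).
    apply: mulr_ge0; [apply: mulr_ge0 =>//; rewrite divr_ge0 // ltW // | rewrite subr_ge0 ltW //].
  have h2 : lmax / Rad * n2 * (n2 - b * Rad) = lmax / Rad * n2 ^+ 2 - lmax * b * n2.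
    by field; rewrite gt_eqF.
  lra.
rewrite n2sq in Qx *.
move=> h.
rewrite mulrBl.
have q2 : lmin / 2 * S2 <= Q / 2 by rewrite mulrAC ler_pM2r // invr_gt0 ltr0n.
lra.
Qed.
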